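(* Let $c\ge2$ and let $\mathcal{D}$ be a domain. Then the measure $\mathsf{FKIs}_{\mathcal{D}^\circ,c}$ on $\{0,1\}^{E(\mathcal{D}^\circ)}$ satisfies the FKG lattice condition, and hence is positively associated.
   Context: Weights $a=b=1$. Faces of $\mathbb{Z}^2$ are centered at integer points; the face $(i,j)$ is even if $i+j$ is even, odd otherwise. A domain $\mathcal{D}$ is a finite subgraph of $\mathbb{Z}^2$ consisting of a simple cycle $\partial\mathcal{D}$ with everything it encloses. An ice-rule spin configuration is $\sigma\colon F(\mathbb{Z}^2)\to\{\pm1\}$ such that around every vertex at least one diagonal pair of faces has equal spins; a vertex is of type $c$ if both diagonal pairs agree. $\mathsf{Spin}_{\mathcal{D},c}^{++}$ is the measure on ice-rule configurations equal to $+1$ on all faces outside $\mathcal{D}$, proportional to $c^{N_c}$ with $N_c$ the number of type-$c$ vertices of $\mathcal{D}$. A corner of $\mathcal{D}$ is a pair $(u,z)$ with $u$ a face outside $\mathcal{D}$ sharing an edge with a face of $\mathcal{D}$ and $z$ a vertex of $\partial\mathcal{D}$ on $u$. $\mathcal{D}^\bullet$ is the graph on even faces of $\mathcal{D}$ and even corners with edges between even faces of $\mathcal{D}$ sharing a vertex, between a corner $(u,z)$ and an even face $v\ni z$ of $\mathcal{D}$, and between corners $(u,z),(v,z)$, after identifying corners $(u,z),(u,z')$ when $zz'$ is an edge of $\mathcal{D}$; $\mathcal{D}^\circ$ is defined likewise with odd faces and corners. Edges of both are in bijection with vertices of $\mathcal{D}$; $e\in E(\mathcal{D}^\circ)$ and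 $e^*\in E(\mathcal{D}^\bullet)$ denote dual edges. Spins extend to corners by $\sigma(u,z)=\sigma(u)$. $\theta(\sigma^\circ)$ is the set of edges of $\mathcal{D}^\circ$ whose endpoints have different spins; $\omega(\sigma^\bullet)$ is the set of edges $e$ of $\mathcal{D}^\circ$ whose dual $e^*$ has endpoints with different spins. Given $\sigma$, $\xi\in\{0,1\}^{E(\mathcal{D}^\circ)}$ is defined by: $\xi(e)=0$ on $\theta(\sigma^\circ)$, $\xi(e)=1$ on $\omega(\sigma^\bullet)$, otherwise independently $\xi(e)=1$ with probability $(c-1)/c$. $\mathsf{FKIs}_{\mathcal{D}^\circ,c}$ is the law of $\xi$ when $\sigma\sim\mathsf{Spin}_{\mathcal{D},c}^{++}$. The FKG lattice condition for $\mu$ on $\{0,1\}^{E}$ with the pointwise order is $\mu(\xi\vee\xi')\mu(\xi\wedge\xi')\ge\mu(\xi)\mu(\xi')$. *)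

(* Defs.v *)
From HB Require Import structures.
From mathcomp Require Import all_boot all_order all_algebra.
Set Implicit Arguments. Unset Strict Implicit. Unset Printing Implicit Defensive.
Import Order.TTheory GRing.Theory Num.Theory.
Local Open Scope ring_scope.

(* Points of Z^2.  A face (i,j) is the unit square centred at (i,j).
   A VERTEX is also written as a pair (x,y) : it denotes the lattice point
   (x+1/2, y+1/2), whose four surrounding faces are
   SW = (x,y), SE = (x+1,y), NW = (x,y+1), NE = (x+1,y+1). *)
Definition pt := (int * int)%type.

Definition fSW (v : pt) : pt := v.
Definition fSE (v : pt) : pt := (v.1 + 1, v.2).
Definition fNW (v : pt) : pt := (v.1, v.2 + 1).
Definition fNE (v : pt) : pt := (v.1 + 1, v.2 + 1).

Definition face_odd (f : pt) : bool := odd (absz (f.1 + f.2)).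

Definition adjv (u w : pt) : bool :=
  (absz (u.1 - w.1) + absz (u.2 - w.2) == 1)%N.

Definition simple_cycle (p : seq pt) : bool :=
  [&& (3 <= size p)%N, uniq p & cycle adjv p].

(* Jordan even-odd rule: the edge e = (u,w) of the cycle crosses the
   horizontal ray going from the centre of face f to the right
   (a vertical edge at abscissa u.1 + 1/2 >= f.1 + 1/2, spanning
   heights f.2 - 1/2 .. f.2 + 1/2). *)
Definition crosses (f : pt) (e : pt * pt) : bool :=
  let: (u, w) := e in
  [&& u.1 == w.1, f.1 <= u.1 &
     (((u.2 == f.2 - 1) && (w.2 == f.2)) || ((w.2 == f.2 - 1) && (u.2 == f.2)))].

Definition enclosed (p : seq pt) (f : pt) : bool :=
  odd (count (crosses f) (zip p (rot 1 p))).

(* a box of points containing every vertex of p together with all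
   faces/vertices of the domain it encloses *)
Definition bnd (p : seq pt) : nat := (\sum_(v <- p) (absz v.1 + absz v.2))%N.
Definition irange (m : nat) : seq int := [seq (i%:Z - m%:Z) | i <- iota 0 (m.*2.+1)].
Definition gridbox (p : seq pt) : seq pt :=
  let r := irange (bnd p).+1 in [seq (a, b) | a <- r, b <- r].

Definition Dface_list (p : seq pt) : seq pt := [seq f <- gridbox p | enclosed p f].
Definition Dvert_list (p : seq pt) : seq pt :=
  [seq v <- gridbox p | has (fun f => f \in Dface_list p) [:: fSW v; fSE v; fNW v; fNE v]].

Definition Dface (p : seq pt) : finType := seq_sub (Dface_list p).
Definition Dvert (p : seq pt) : finType := seq_sub (Dvert_list p).

(* spins: true = +1, false = -1; a configuration is given on the faces of D
   and extended by +1 outside D *)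
Definition spin_ext (p : seq pt) (s : {ffun Dface p -> bool}) (f : pt) : bool :=
  match (insub f : option (Dface p)) with Some g => s g | None => true end.

Definition ice_at (s : pt -> bool) (v : pt) : bool :=
  (s (fSW v) == s (fNE v)) || (s (fSE v) == s (fNW v)).
Definition typec_at (s : pt -> bool) (v : pt) : bool :=
  (s (fSW v) == s (fNE v)) && (s (fSE v) == s (fNW v)).

(* ice rule around every vertex (outside D all spins are +1, so only the
   vertices of D matter) *)
Definition ice_config (p : seq pt) (s : {ffun Dface p -> bool}) : bool :=
  [forall v : Dvert p, ice_at (spin_ext s) (val v)].

Definition Nc (p : seq pt) (s : {ffun Dface p -> bool}) : nat :=
  #|[set v : Dvert p | typec_at (spin_ext s) (val v)]|.

Definition spin_weight (R : realFieldType) (c : R) (p : seq pt)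
  (s : {ffun Dface p -> bool}) : R :=
  if ice_config s then c ^+ Nc s else 0.

Definition Spin (R : realFieldType) (c : R) (p : seq pt)
  (s : {ffun Dface p -> bool}) : R :=
  spin_weight c s / \sum_(s' : {ffun Dface p -> bool}) spin_weight c s'.

(* Edges of D° (and their duals in D•) are indexed by the vertices of D:
   the edge e at v joins the two odd faces/corners of v, e* joins the two
   even ones; corners carry the spin of their (outside) face, i.e. +1. *)
Definition theta_at (s : pt -> bool) (v : pt) : bool :=
  if face_odd (fSW v) then s (fSW v) != s (fNE v) else s (fSE v) != s (fNW v).
Definition omega_at (s : pt -> bool) (v : pt) : bool :=
  if face_odd (fSW v) then s (fSE v) != s (fNW v) else s (fSW v) != s (fNE v).

Definition xi_kernel (R : realFieldType) (c : R) (s : pt -> bool) (v : pt)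
  (b : bool) : R :=
  if theta_at s v then (if b then 0 else 1)
  else if omega_at s v then (if b then 1 else 0)
  else (if b then (c - 1) / c else 1 / c).

Definition FKIs (R : realFieldType) (c : R) (p : seq pt)
  (xi : {ffun Dvert p -> bool}) : R :=
  \sum_(s : {ffun Dface p -> bool})
     Spin c s * \prod_(v : Dvert p) xi_kernel c (spin_ext s) (val v) (xi v).

Definition cfg_join (T : finType) (x y : {ffun T -> bool}) : {ffun T -> bool} :=
  [ffun e => x e || y e].
Definition cfg_meet (T : finType) (x y : {ffun T -> bool}) : {ffun T -> bool} :=
  [ffun e => x e && y e].
Definition cfg_le (T : finType) (x y : {ffun T -> bool}) : bool :=
  [forall e, x e ==> y e].

Definition FKG_lattice (T : finType) (R : realFieldType)
  (mu : {ffun T -> bool} -> R) : Prop :=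
  forall x y : {ffun T -> bool},
    mu x * mu y <= mu (cfg_join x y) * mu (cfg_meet x y).

Definition increasing (T : finType) (R : realFieldType)
  (f : {ffun T -> bool} -> R) : Prop :=
  forall x y : {ffun T -> bool}, cfg_le x y -> f x <= f y.

Definition expect (T : finType) (R : realFieldType)
  (mu : {ffun T -> bool} -> R) (f : {ffun T -> bool} -> R) : R :=
  \sum_(x : {ffun T -> bool}) mu x * f x.

Definition positively_associated (T : finType) (R : realFieldType)
  (mu : {ffun T -> bool} -> R) : Prop :=
  forall f g : {ffun T -> bool} -> R, increasing f -> increasing g ->
    expect mu f * expect mu g <= expect mu (fun x => f x * g x).

(* Main.v *)
Require Import Defs.
From HB Require Import structures.
From mathcomp Require Import all_boot all_order all_algebra.
From mathcomp Require Import ring lra.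
Set Implicit Arguments. Unset Strict Implicit. Unset Printing Implicit Defensive.
Import Order.TTheory GRing.Theory Num.Theory.
Local Open Scope ring_scope.
Lemma AD1 (R : realFieldType) (a0 a1 b0 b1 c0 c1 d0 d1 : R) :
  0 <= a0 -> 0 <= a1 -> 0 <= b0 -> 0 <= b1 -> 0 <= c0 -> 0 <= c1 -> 0 <= d0 -> 0 <= d1 ->
  a0 * b0 <= c0 * d0 -> a0 * b1 <= c1 * d0 -> a1 * b0 <= c1 * d0 -> a1 * b1 <= c1 * d1 ->
  (a0 + a1) * (b0 + b1) <= (c0 + c1) * (d0 + d1).
Proof.
move=> ha0 ha1 hb0 hb1 hc0 hc1 hd0 hd1 h00 h01 h10 h11.
set u := a0 * b1; set v := a1 * b0; set w := c1 * d0; set z := c0 * d1.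
have hu : 0 <= u by rewrite mulr_ge0.
have hv : 0 <= v by rewrite mulr_ge0.
have hz : 0 <= z by rewrite mulr_ge0.
have key : u + v <= w + z.
  have [w0|wpos] := eqVneq w 0.
    have u0 : u = 0 by apply/le_anti; rewrite hu andbT -w0.
    have v0 : v = 0 by apply/le_anti; rewrite hv andbT -w0.
    by rewrite u0 v0 w0 !add0r.
  have wp : 0 < w by rewrite lt_def wpos mulr_ge0.
  have huv : u * v <= w * z.
    have -> : u * v = (a0 * b0) * (a1 * b1) by rewrite /u /v; ring.
    have -> : w * z = (c0 * d0) * (c1 * d1) by rewrite /w /z; ring.
    by apply: ler_pM => //; rewrite mulr_ge0.
  have : (w - u) * (w - v) >= 0 by apply: mulr_ge0; rewrite subr_ge0.
  move=> h.
  have : w * (u + v) <= w * (w + z) by nra.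
  by rewrite ler_pM2l.
have -> : (a0 + a1) * (b0 + b1) = a0 * b0 + a1 * b1 + (u + v) by rewrite /u /v; ring.
have -> : (c0 + c1) * (d0 + d1) = c0 * d0 + c1 * d1 + (w + z) by rewrite /w /z; ring.
by apply: lerD => //; apply: lerD.
Qed.

Section AD.
Variables (R : realFieldType) (I : finType).
Definition upd (x : {ffun I -> bool}) (a : I) (b : bool) : {ffun I -> bool} :=
  [ffun i => if i == a then b else x i].
Definition agree_off (s : seq I) (x x' : {ffun I -> bool}) :=
  [forall i, (i \notin s) ==> (x' i == x i)].
Definition Psum (h : {ffun I -> bool} -> R) s x := \sum_(x' | agree_off s x x') h x'.

Lemma Psum_nil h x : Psum h [::] x = h x.
Proof.
rewrite /Psum (big_pred1 x) // => x'; apply/forallP/eqP => [H|->].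
  by apply/ffunP => i; move: (H i); rewrite in_nil /= => /eqP.
by move=> i; rewrite eqxx implybT.
Qed.

Lemma Psum_cons_in h a s x : a \in s -> Psum h (a :: s) x = Psum h s x.
Proof.
move=> as_; apply: eq_bigl => x'; apply: eq_forallb => i.
rewrite in_cons negb_or; case: eqP => //= ->; by rewrite as_.
Qed.

Lemma agree_cons a s x x' b : a \notin s ->
  (agree_off (a :: s) x x' && (x' a == b)) = agree_off s (upd x a b) x'.
Proof.
move=> as_; apply/andP/forallP => [[/forallP H ha] i|H].
  rewrite ffunE; have [->|ne] := eqVneq i a; first by rewrite as_ /= ha.
  by move: (H i); rewrite in_cons negb_or (negbTE ne).
split; last by move: (H a); rewrite as_ ffunE eqxx.
apply/forallP => i; rewrite in_cons negb_or; apply/implyP => /andP[ia iS].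
by move: (H i); rewrite iS ffunE (negbTE ia).
Qed.

Lemma Psum_cons h a s x : a \notin s ->
  Psum h (a :: s) x = Psum h s (upd x a false) + Psum h s (upd x a true).
Proof.
move=> as_; rewrite /Psum (bigID (fun x' : {ffun I -> bool} => x' a)) /= addrC.
congr (_ + _); apply: eq_bigl => x'; rewrite -agree_cons //.
  by case: (x' a); rewrite ?andbT ?andbF.
by case: (x' a); rewrite ?andbT ?andbF.
Qed.

Lemma upd_join x y a b1 b2 :
  cfg_join (upd x a b1) (upd y a b2) = upd (cfg_join x y) a (b1 || b2).
Proof. by apply/ffunP => i; rewrite !ffunE; case: eqP. Qed.
Lemma upd_meet x y a b1 b2 :
  cfg_meet (upd x a b1) (upd y a b2) = upd (cfg_meet x y) a (b1 && b2).
Proof. by apply/ffunP => i; rewrite !ffunE; case: eqP. Qed.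

Lemma Psum_ge0 h s x : (forall z, 0 <= h z) -> 0 <= Psum h s x.
Proof. by move=> H; apply: sumr_ge0. Qed.

Theorem four_functions (al be ga de : {ffun I -> bool} -> R) :
  (forall x, 0 <= al x) -> (forall x, 0 <= be x) ->
  (forall x, 0 <= ga x) -> (forall x, 0 <= de x) ->
  (forall x y, al x * be y <= ga (cfg_join x y) * de (cfg_meet x y)) ->
  (\sum_x al x) * (\sum_x be x) <= (\sum_x ga x) * (\sum_x de x).
Proof.
move=> Ha Hb Hg Hd H.
have gen : forall s x y, Psum al s x * Psum be s y <=
    Psum ga s (cfg_join x y) * Psum de s (cfg_meet x y).
  elim=> [|a s IH] x y; first by rewrite !Psum_nil.
  case: (boolP (a \in s)) => ias; first by rewrite !Psum_cons_in.
  rewrite !Psum_cons //.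
  apply: AD1; rewrite ?Psum_ge0 //.
  - by have := IH (upd x a false) (upd y a false); rewrite upd_join upd_meet.
  - by have := IH (upd x a false) (upd y a true); rewrite upd_join upd_meet.
  - by have := IH (upd x a true) (upd y a false); rewrite upd_join upd_meet.
  - by have := IH (upd x a true) (upd y a true); rewrite upd_join upd_meet.
have all_ag : forall x x', agree_off (enum I) x x'.
  by move=> x x'; apply/forallP => i; rewrite mem_enum.
have := gen (enum I) [ffun=> false] [ffun=> false].
by rewrite /Psum !(eq_bigl _ _ (all_ag _)).
Qed.
End AD.
Section Gen.
Variables (R : realFieldType).

Lemma marginal_lattice (I J : finType) (mu : {ffun I -> bool} -> {ffun J -> bool} -> R) :
  (forall x l, 0 <= mu x l) ->
  (forall x y l l', mu x l * mu y l' <= mu (cfg_join x y) (cfg_join l l') * mu (cfg_meet x y) (cfg_meet l l')) ->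
  FKG_lattice (fun x => \sum_l mu x l).
Proof.
move=> H0 H x y /=; apply: four_functions => //.
Qed.

Lemma join_le (I : finType) (x y : {ffun I -> bool}) : cfg_le x (cfg_join x y).
Proof. by apply/forallP => i; rewrite ffunE; apply/implyP => ->. Qed.
Lemma join_le2 (I : finType) (x y : {ffun I -> bool}) : cfg_le y (cfg_join x y).
Proof. by apply/forallP => i; rewrite ffunE; apply/implyP => ->; rewrite orbT. Qed.
Lemma bot_le (I : finType) (x : {ffun I -> bool}) : cfg_le [ffun=> false] x.
Proof. by apply/forallP => i; rewrite ffunE. Qed.

Lemma FKG_pos (I : finType) (m : {ffun I -> bool} -> R) :
  (forall x, 0 <= m x) -> \sum_x m x = 1 -> FKG_lattice m -> positively_associated m.
Proof.
move=> H0 H1 HL f g Hf Hg.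
set b := [ffun=> false] : {ffun I -> bool}.
pose f' x := f x - f b; pose g' x := g x - g b.
have f'0 x : 0 <= f' x by rewrite subr_ge0 Hf // bot_le.
have g'0 x : 0 <= g' x by rewrite subr_ge0 Hg // bot_le.
have E1 (h : {ffun I -> bool} -> R) k : expect m (fun x => h x - k) = expect m h - k.
  rewrite /expect -[k in RHS]mul1r -H1 mulr_suml -sumrB; apply: eq_bigr => x _; ring.
have E2 : expect m (fun x => f' x * g' x) =
   expect m (fun x => f x * g x) - f b * expect m g - g b * expect m f + f b * g b.
  rewrite /expect /f' /g'.
  have -> : f b * g b = \sum_x m x * (f b * g b) by rewrite -mulr_suml H1 mul1r.
  rewrite !mulr_sumr -!sumrB -big_split /=; apply: eq_bigr => x _; ring.
have AD := four_functions (al := fun x => m x * f' x) (be := fun x => m x * g' x)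
   (ga := fun x => m x * (f' x * g' x)) (de := m).
have : (\sum_x m x * f' x) * (\sum_x m x * g' x) <=
       (\sum_x m x * (f' x * g' x)) * (\sum_x m x).
  apply: AD => //; try by move=> x; rewrite ?mulr_ge0.
  move=> x y.
  have -> : m x * f' x * (m y * g' y) = (m x * m y) * (f' x * g' y) by ring.
  have -> : m (cfg_join x y) * (f' (cfg_join x y) * g' (cfg_join x y)) * m (cfg_meet x y)
     = (m (cfg_join x y) * m (cfg_meet x y)) * (f' (cfg_join x y) * g' (cfg_join x y)) by ring.
  apply: ler_pM; [by rewrite mulr_ge0|by rewrite mulr_ge0|exact: HL|].
  apply: ler_pM => //; rewrite lerD2r; [apply: Hf; exact: join_le|apply: Hg; exact: join_le2].
rewrite H1 mulr1.
have e1 := E1 f (f b); have e2 := E1 g (g b).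
rewrite /expect in e1 e2 E2.
rewrite /f' /g' in E2 *.
rewrite e1 e2 E2 /expect => h.
have : 0 <= (\sum_i m i * (f i * g i) - f b * (\sum_i m i * g i) - g b * (\sum_i m i * f i) + f b * g b)
  - ((\sum_i m i * f i - f b) * (\sum_i m i * g i - g b)) by rewrite subr_ge0.
move=> h2; rewrite -subr_ge0.
have -> : \sum_x m x * (f x * g x) - (\sum_x m x * f x) * (\sum_x m x * g x) =
  (\sum_i m i * (f i * g i) - f b * (\sum_i m i * g i) - g b * (\sum_i m i * f i) + f b * g b)
  - ((\sum_i m i * f i - f b) * (\sum_i m i * g i - g b)) by ring.
exact: h2.
Qed.
End Gen.

Lemma odd_abs1 (z : int) : odd (absz (z + 1)) = ~~ odd (absz z).
Proof.
case: z => n.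
  by rewrite -[1]/(1%:Z) -PoszD absz_nat addn1 /=.
rewrite NegzE.
have -> : - (n.+1)%:Z + 1 = - n%:Z by rewrite -addn1 PoszD opprD addrK.
by rewrite !abszN !absz_nat /= negbK.
Qed.

Lemma fodd_SE v : face_odd (fSE v) = ~~ face_odd (fSW v).
Proof. by rewrite /face_odd /= -addrA (addrC 1) addrA odd_abs1. Qed.
Lemma fodd_NW v : face_odd (fNW v) = ~~ face_odd (fSW v).
Proof. by rewrite /face_odd /= addrA odd_abs1. Qed.
Lemma fodd_NE v : face_odd (fNE v) = face_odd (fSW v).
Proof.
have := fodd_SE (fNW v); rewrite fodd_NW negbK => <-.
by rewrite /face_odd /=.
Qed.
Section Counting.
Variable T : finType.
Implicit Types a b : {ffun T -> bool}.
Definition xo a b : {ffun T -> bool} := [ffun f => a f == b f].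

Lemma xo_cancel a k b : xo a b = k -> b = xo a k.
Proof. by move=> <-; apply/ffunP => i; rewrite !ffunE; case: (a i); case: (b i). Qed.
Lemma xo_inj a b k : xo a k = xo b k -> a = b.
Proof.
move=> /ffunP H; apply/ffunP => i; move: (H i); rewrite !ffunE.
by case: (a i); case: (b i); case: (k i).
Qed.
Lemma xo_swap q1 q2 r1 r2 : xo q1 q2 = xo r1 r2 -> xo q1 r1 = xo q2 r2.
Proof.
move=> /ffunP H; apply/ffunP => i; move: (H i); rewrite !ffunE.
by case: (q1 i); case: (q2 i); case: (r1 i); case: (r2 i).
Qed.

Lemma sub_count (U W K J : {set {ffun T -> bool}}) :
  (forall u u', u \in U -> u' \in U -> xo u u' \in U) ->
  (forall w w', w \in W -> w' \in W -> xo w w' \in W) ->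
  (forall u w, u \in U -> w \in W -> xo u w \in K) ->
  U :&: W \subset J ->
  (#|U| * #|W| <= #|K| * #|J|)%N.
Proof.
move=> HU HW HK HJ.
rewrite -cardsX -sum1_card.
rewrite (partition_big (fun q => xo q.1 q.2) (mem K)); last first.
  by move=> [u w] /setXP [hu hw]; apply: HK.
rewrite -sum_nat_const.
apply: leq_sum => k _; rewrite sum1_card.
set A := [pred q | (q \in setX U W) && (xo q.1 q.2 == k)].
case: (pickP A) => [[q01 q02] Hq0|A0]; last by rewrite eq_card0.
move: Hq0 => /andP[/setXP[hq1 hq2] /eqP /= hk0].
pose phi (q : {ffun T -> bool} * {ffun T -> bool}) := xo q.1 q01.
have inj : {in A &, injective phi}.
  move=> [q1 q2] [r1 r2] /andP[_ /eqP hq] /andP[_ /eqP hr] e1.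
  have e : q1 = r1 by apply: (@xo_inj _ _ q01); exact: e1.
  simpl in hq, hr; rewrite -e in hr *.
  by rewrite (xo_cancel hq) (xo_cancel hr).
rewrite -(card_in_imset inj); apply: subset_leq_card.
apply/subsetP => z /imsetP[[q1 q2] /andP[/setXP[h1 h2] /eqP hk] ->].
apply: (subsetP HJ); rewrite inE /phi /=; apply/andP; split; first by apply: HU.
have e : xo q1 q2 = xo q01 q02 by rewrite hk hk0.
by rewrite (xo_swap e); apply: HW.
Qed.

Variable od : pred T.
Definition mix a b : {ffun T -> bool} := [ffun f => if od f then a f else b f].

Lemma indep (X Y : {set {ffun T -> bool}}) :
  (forall a b, (mix a b \in X) = (a \in X)) ->
  (forall a b, (mix a b \in Y) = (b \in Y)) ->
  (#|X :&: Y| * #|[set: {ffun T -> bool}]| = #|X| * #|Y|)%N.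
Proof.
move=> HX HY; rewrite -!cardsX.
pose phi (q : {ffun T -> bool} * {ffun T -> bool}) := (mix q.1 q.2, mix q.2 q.1).
have invol : involutive phi.
  by move=> [a b]; congr (_, _); apply/ffunP => i; rewrite !ffunE /=; case: (od i).
have inj := inv_inj invol.
apply/eqP; rewrite eqn_leq; apply/andP; split.
  rewrite -(card_imset _ inj); apply: subset_leq_card; apply/subsetP => z.
  move=> /imsetP[[a b] /setXP[/setIP[ha hb] _] ->]; apply/setXP; split => /=.
    by rewrite HX.
  by rewrite HY.
rewrite -(card_imset _ inj); apply: subset_leq_card; apply/subsetP => z.
move=> /imsetP[[a b] /setXP[ha hb] ->]; apply/setXP; split; last by rewrite inE.
by rewrite inE /= HX HY ha hb.
Qed.
End Counting.
Section Model.
Variable p : seq pt.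
Local Notation V := (Dvert p).
Local Notation FT := (Dface p).
Local Notation G := {ffun FT -> bool}.

Lemma spin_ext_xo (a b : G) f : spin_ext (xo a b) f = (spin_ext a f == spin_ext b f).
Proof. by rewrite /spin_ext; case: insub => [g|] //; rewrite ffunE. Qed.

Definition odF (f : FT) := face_odd (val f).

Lemma spin_ext_mix (a b : G) f :
  spin_ext (mix odF a b) f = if face_odd f then spin_ext a f else spin_ext b f.
Proof.
rewrite /spin_ext; case: insubP => [g _ eg|_]; first by rewrite ffunE /odF eg.
by case: ifP.
Qed.

Definition Ov (s : G) (v : V) := ~~ theta_at (spin_ext s) (val v).
Definition Ev (s : G) (v : V) := ~~ omega_at (spin_ext s) (val v).

Lemma Ov_mix a b v : Ov (mix odF a b) v = Ov a v.
Proof.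
rewrite /Ov /theta_at !spin_ext_mix fodd_NE fodd_SE fodd_NW.
by case: face_odd.
Qed.
Lemma Ev_mix a b v : Ev (mix odF a b) v = Ev b v.
Proof.
rewrite /Ev /omega_at !spin_ext_mix fodd_NE fodd_SE fodd_NW.
by case: face_odd.
Qed.

Lemma bool4 (x1 x2 y1 y2 : bool) : ~~ (x1 != x2) -> ~~ (y1 != y2) -> ~~ ((x1 == y1) != (x2 == y2)).
Proof. by case: x1; case: x2; case: y1; case: y2. Qed.

Lemma Ov_xo a b v : Ov a v -> Ov b v -> Ov (xo a b) v.
Proof. by rewrite /Ov /theta_at !spin_ext_xo; case: face_odd; apply: bool4. Qed.
Lemma Ev_xo a b v : Ev a v -> Ev b v -> Ev (xo a b) v.
Proof. by rewrite /Ev /omega_at !spin_ext_xo; case: face_odd; apply: bool4. Qed.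

Definition CO (xi : {ffun V -> bool}) : {set G} := [set s | [forall v, xi v ==> Ov s v]].
Definition CE (l : {ffun V -> bool}) : {set G} := [set s | [forall v, ~~ l v ==> Ev s v]].

Lemma CO_lattice x y : (#|CO x| * #|CO y| <= #|CO (cfg_meet x y)| * #|CO (cfg_join x y)|)%N.
Proof.
apply: sub_count.
- move=> u u'; rewrite !inE => /forallP H /forallP H'; apply/forallP => v.
  by apply/implyP => h; apply: Ov_xo; [move: (H v)|move: (H' v)]; rewrite h.
- move=> u u'; rewrite !inE => /forallP H /forallP H'; apply/forallP => v.
  by apply/implyP => h; apply: Ov_xo; [move: (H v)|move: (H' v)]; rewrite h.
- move=> u u'; rewrite !inE => /forallP H /forallP H'; apply/forallP => v.
  rewrite ffunE; apply/implyP => /andP[h1 h2].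
  by apply: Ov_xo; [move: (H v)|move: (H' v)]; rewrite ?h1 ?h2.
apply/subsetP => s; rewrite !inE => /andP[/forallP H /forallP H']; apply/forallP => v.
rewrite ffunE; apply/implyP => /orP[h|h]; [move: (H v)|move: (H' v)]; by rewrite h.
Qed.

Lemma CE_lattice x y : (#|CE x| * #|CE y| <= #|CE (cfg_join x y)| * #|CE (cfg_meet x y)|)%N.
Proof.
apply: sub_count.
- move=> u u'; rewrite !inE => /forallP H /forallP H'; apply/forallP => v.
  by apply/implyP => h; apply: Ev_xo; [move: (H v)|move: (H' v)]; rewrite h.
- move=> u u'; rewrite !inE => /forallP H /forallP H'; apply/forallP => v.
  by apply/implyP => h; apply: Ev_xo; [move: (H v)|move: (H' v)]; rewrite h.
- move=> u u'; rewrite !inE => /forallP H /forallP H'; apply/forallP => v.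
  rewrite ffunE negb_or; apply/implyP => /andP[h1 h2].
  by apply: Ev_xo; [move: (H v)|move: (H' v)]; rewrite ?h1 ?h2.
apply/subsetP => s; rewrite !inE => /andP[/forallP H /forallP H']; apply/forallP => v.
rewrite ffunE negb_and; apply/implyP => /orP[h|h]; [move: (H v)|move: (H' v)]; by rewrite h.
Qed.

Definition Ncount x l := #|CO x :&: CE l|.

Lemma N_lattice x y l l' :
  (Ncount x l * Ncount y l' <= Ncount (cfg_join x y) (cfg_join l l') * Ncount (cfg_meet x y) (cfg_meet l l'))%N.
Proof.
have HX z : forall a b, (mix odF a b \in CO z) = (a \in CO z).
  by move=> a b; rewrite !inE; apply: eq_forallb => v; rewrite Ov_mix.
have HY z : forall a b, (mix odF a b \in CE z) = (b \in CE z).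
  by move=> a b; rewrite !inE; apply: eq_forallb => v; rewrite Ev_mix.
set M := #|[set: G]|.
have M0 : (0 < M)%N by apply/card_gt0P; exists [ffun=> true]; rewrite inE.
have E z w : (Ncount z w * M = #|CO z| * #|CE w|)%N by rewrite /Ncount (indep (HX z) (HY w)).
rewrite -(leq_pmul2r M0) -(leq_pmul2r M0).
have -> : (Ncount x l * Ncount y l' * M * M = (Ncount x l * M) * (Ncount y l' * M))%N.
  by rewrite mulnAC -!mulnA.
have -> : (Ncount (cfg_join x y) (cfg_join l l') * Ncount (cfg_meet x y) (cfg_meet l l') * M * M
   = (Ncount (cfg_join x y) (cfg_join l l') * M) * (Ncount (cfg_meet x y) (cfg_meet l l') * M))%N.
  by rewrite mulnAC -!mulnA.
rewrite !E.
have h1 := CO_lattice x y; have h2 := CE_lattice l l'.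
have -> : (#|CO x| * #|CE l| * (#|CO y| * #|CE l'|) = (#|CO x| * #|CO y|) * (#|CE l| * #|CE l'|))%N.
  by rewrite mulnACA.
have -> : (#|CO (cfg_join x y)| * #|CE (cfg_join l l')| * (#|CO (cfg_meet x y)| * #|CE (cfg_meet l l')|)
   = (#|CO (cfg_meet x y)| * #|CO (cfg_join x y)|) * (#|CE (cfg_join l l')| * #|CE (cfg_meet l l')|))%N.
  by rewrite mulnACA (mulnC #|CO _|).
exact: leq_mul.
Qed.
End Model.
Lemma prod_ind (R : realFieldType) (I : finType) (P : pred I) :
  \prod_i ((P i)%:R : R) = ([forall i, P i])%:R.
Proof.
case: (boolP [forall i, P i]) => [/forallP H|/forallPn[i Hi]].
  by apply: big1 => i _; rewrite H.
by rewrite (bigD1 i) //= (negbTE Hi) mul0r.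
Qed.

Lemma sum_ind (R : realFieldType) (I : finType) (A : {set I}) :
  \sum_i ((i \in A)%:R : R) = #|A|%:R.
Proof.
rewrite -sum1_card natr_sum [in RHS]big_mkcond /=; apply: eq_bigr => i _.
by case: (i \in A).
Qed.

Section Main.
Variables (R : realFieldType) (c : R) (p : seq pt).
Local Notation V := (Dvert p).
Local Notation FT := (Dface p).
Local Notation G := {ffun FT -> bool}.

Definition qb (b O E : bool) : R :=
  if b then (if O then (if E then c - 1 else 1) else 0) else (if E then 1 else 0).
Definition wv (sp : pt -> bool) (v : pt) : R :=
  if ice_at sp v then (if typec_at sp v then c else 1) else 0.

Lemma vert_factor sp v b : c != 0 ->
  wv sp v * xi_kernel c sp v b = qb b (~~ theta_at sp v) (~~ omega_at sp v).
Proof.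
move=> c0; rewrite /wv /qb /ice_at /typec_at /xi_kernel /theta_at /omega_at.
case: face_odd; case: (sp (fSW v)); case: (sp (fSE v)); case: (sp (fNW v));
  case: (sp (fNE v)); case: b => /=; rewrite ?mul0r ?mulr0 ?mulr1 ?mul1r //;
  try (by rewrite mulrCA mulfV // mulr1); by rewrite mulfV.
Qed.

Lemma spin_weight_prod (s : G) :
  spin_weight c s = \prod_(v : V) wv (spin_ext s) (val v).
Proof.
rewrite /spin_weight /wv; case: ifP => [/forallP H|/negbT/forallPn[v Hv]]; last first.
  by rewrite (bigD1 v) //= (negbTE Hv) mul0r.
under eq_bigr => v _ do rewrite H.
rewrite -big_mkcond /= prodr_const /Nc; congr (_ ^+ _).
by apply: eq_card => v; rewrite !inE.
Qed.

Lemma F_eq s (xi : {ffun V -> bool}) : c != 0 ->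
  spin_weight c s * \prod_(v : V) xi_kernel c (spin_ext s) (val v) (xi v)
  = \prod_(v : V) qb (xi v) (Ov s v) (Ev s v).
Proof.
move=> c0; rewrite spin_weight_prod -big_split /=; apply: eq_bigr => v _.
by rewrite vert_factor.
Qed.

Definition aw (b l : bool) : R := if b then (if l then 1 else c - 2) else (if l then 0 else 1).

Lemma qb_split b O E :
  qb b O E = \sum_(l : bool) aw b l * ((b ==> O) && (~~ l ==> E))%:R.
Proof.
rewrite big_bool /qb /aw; case: b; case: O; case: E => /=;
  rewrite ?mulr1 ?mulr0 ?mul0r ?add0r ?addr0 //.
by ring.
Qed.

Definition mu (xi l : {ffun V -> bool}) : R :=
  (\prod_(v : V) aw (xi v) (l v)) * (Ncount xi l)%:R.

Lemma sum_eq (xi : {ffun V -> bool}) : c != 0 ->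
  \sum_(s : G) spin_weight c s * \prod_(v : V) xi_kernel c (spin_ext s) (val v) (xi v)
  = \sum_(l : {ffun V -> bool}) mu xi l.
Proof.
move=> c0; under eq_bigr => s _ do rewrite F_eq // (eq_bigr _ (fun v _ => qb_split _ _ _)) bigA_distr_bigA.
rewrite exchange_big /=; apply: eq_bigr => l _.
under eq_bigr => s _ do rewrite big_split /= prod_ind.
rewrite -mulr_sumr /mu /Ncount -sum_ind; congr (_ * _); apply: eq_bigr => s _.
congr ((nat_of_bool _)%:R); rewrite !inE; apply/idP/idP => [/forallP H|/andP[/forallP H1 /forallP H2]].
  by apply/andP; split; apply/forallP => v; case/andP: (H v).
by apply/forallP => v; rewrite H1 H2.
Qed.

Hypothesis c2 : 2 <= c.

Lemma c0 : c != 0.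
Proof. by apply: lt0r_neq0; apply: lt_le_trans c2. Qed.
Lemma c_ge0 : 0 <= c.
Proof. by apply: le_trans c2. Qed.

Lemma aw_ge0 b l : 0 <= aw b l.
Proof. by rewrite /aw; case: b; case: l => //; rewrite subr_ge0. Qed.

Lemma mu_ge0 xi l : 0 <= mu xi l.
Proof. by rewrite /mu mulr_ge0 // prodr_ge0 // => v _; apply: aw_ge0. Qed.

Lemma aw_lattice x y l l' : aw x l * aw y l' <= aw (x || y) (l || l') * aw (x && y) (l && l').
Proof.
have h : 0 <= c - 2 by rewrite subr_ge0.
rewrite /aw; case: x; case: y; case: l; case: l' => /=;
  rewrite ?mulr0 ?mul0r ?mulr1 ?mul1r //.
Qed.

Lemma mu_lattice x y l l' :
  mu x l * mu y l' <= mu (cfg_join x y) (cfg_join l l') * mu (cfg_meet x y) (cfg_meet l l').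
Proof.
rewrite /mu mulrACA [X in _ <= X]mulrACA.
apply: ler_pM; rewrite ?mulr_ge0 ?prodr_ge0 //; try by move=> v _; apply: aw_ge0.
  rewrite -!big_split /=; apply: ler_prod => v _; rewrite mulr_ge0 ?aw_ge0 //=.
  by rewrite !ffunE aw_lattice.
by rewrite -!natrM ler_nat N_lattice.
Qed.
End Main.
Lemma spin_ext_true (p : seq pt) f : spin_ext ([ffun=> true] : {ffun Dface p -> bool}) f = true.
Proof. by rewrite /spin_ext; case: insub => //= g; rewrite ffunE. Qed.

Lemma kernel_sum (R : realFieldType) (c : R) sp v : c != 0 ->
  \sum_(b : bool) xi_kernel c sp v b = 1.
Proof.
move=> c0; rewrite big_bool /= /xi_kernel; case: theta_at; rewrite ?addr0 ?add0r //.
case: omega_at; rewrite ?addr0 //.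
by rewrite -mulrDl subrK divff.
Qed.

Theorem proposition7p4 (R : realFieldType) (c : R) (p : seq pt) :
  2 <= c -> simple_cycle p ->
  FKG_lattice (FKIs c (p := p)) /\ positively_associated (FKIs c (p := p)).
Proof.
move=> c2 _.
have cn0 := c0 c2.
set Z := \sum_(s : {ffun Dface p -> bool}) spin_weight c s.
have w_ge0 s : 0 <= spin_weight c s.
  by rewrite /spin_weight; case: ifP => _ //; rewrite exprn_ge0 // c_ge0.
have Zpos : 0 < Z.
  set s1 := [ffun=> true] : {ffun Dface p -> bool}.
  have ice : ice_config s1.
    by apply/forallP => v; rewrite /ice_at !spin_ext_true.
  have w1 : 0 < spin_weight c s1.
    by rewrite /spin_weight ice exprn_gt0 // (lt_le_trans _ c2).
  rewrite /Z (bigD1 s1) //=; apply: (lt_le_trans w1).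
  by rewrite lerDl sumr_ge0.
have FK (xi : {ffun Dvert p -> bool}) : FKIs c xi = Z^-1 * \sum_l mu c xi l.
  rewrite /FKIs -sum_eq // mulr_sumr; apply: eq_bigr => s _.
  by rewrite /Spin /Z mulrAC [RHS]mulrC.
have FKG : FKG_lattice (FKIs c (p:=p)).
  move=> x y; rewrite !FK.
  have h := marginal_lattice (mu_ge0 c2) (mu_lattice c2) x y; simpl in h.
  rewrite mulrACA [X in _ <= X]mulrACA; apply: ler_wpM2l => //.
  by rewrite mulr_ge0 // invr_ge0 ltW.
split => //.
apply: FKG_pos => //.
  move=> x; rewrite FK; apply: mulr_ge0; first by rewrite invr_ge0 ltW.
  by apply: sumr_ge0 => l _; exact: mu_ge0.
rewrite /FKIs exchange_big /=.
rewrite (eq_bigr (fun s => Spin c s)); last first.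
  move=> s _; rewrite -mulr_sumr.
  rewrite -(bigA_distr_bigA (fun (v : Dvert p) (b : bool) => xi_kernel c (spin_ext s) (val v) b)) /=.
  by rewrite big1 ?mulr1 // => v _; exact: kernel_sum.
by rewrite /Spin -/Z -mulr_suml divff // gt_eqF.
Qed.
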